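(* Let $\mathcal{C}$ be a finite set of size $k\geq1$ and let $(\omega_n)_{n=0}^\infty$ be a sequence of distributions on $\mathcal{C}$ such that $\omega_n\trianglelefteq\omega_{n+1}$ for all $n$. Suppose there is a real $A\geq 1$ such that for all $n\in\mathbb{N}$ and all $\alpha\in\mathcal{D}^+(\omega_n,\omega_{n+1})$, \[\|\omega_{n+1}-\omega_n\|_1\leq A\cdot(\omega_{n+1}(\alpha)-\omega_n(\alpha)).\] Then \[\sum_{n=0}^\infty\|\omega_{n+1}-\omega_n\|_1\leq\frac{(1+A)^{k+1}}{A}\cdot\mathrm{disc}(\omega_0)<\infty.\]
   Context: A distribution on $\mathcal{C}$ is a function $\omega\colon\mathcal{C}\to[0,1]$ with $\sum_\alpha\omega(\alpha)=1$; $\|\omega\|_1=\sum_\alpha|\omega(\alpha)|$; $\mathrm{disc}(\omega)=\max_{\alpha}|\omega(\alpha)-1/k|$. For distributions $\omega,\eta$: $\mathcal{D}^+(\omega,\eta)=\{\alpha:\eta(\alpha)>\omega(\alpha)\}$, $\mathcal{D}^-(\omega,\eta)=\{\alpha:\eta(\alpha)<\omega(\alpha)\}$. We write $\omega\vartriangleleft\eta$ if there is $\alpha\in\mathcal{D}^+(\omega,\eta)$ such that $\eta(\alpha)\leq\eta(\beta)$ for all $\beta\in\mathcal{D}^-(\omega,\eta)$, and $\omega\trianglelefteq\eta$ if $\omega\vartriangleleft\eta$ or $\omega=\eta$. *)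

(* Defs.v *)
From HB Require Import structures.
From mathcomp Require Import all_boot all_order all_algebra.
Set Implicit Arguments. Unset Strict Implicit. Unset Printing Implicit Defensive.
Import Order.TTheory GRing.Theory Num.Theory.
Local Open Scope ring_scope.

Section Dist.
Variables (R : realFieldType) (C : finType).

Definition distribution (w : C -> R) : Prop :=
  (forall a, 0 <= w a <= 1) /\ \sum_(a : C) w a = 1.

Definition norm1 (w : C -> R) : R := \sum_(a : C) `|w a|.

Definition disc (w : C -> R) : R :=
  \big[Num.max/0]_(a : C) `|w a - (#|C|%:R)^-1|.

Definition Dplus (w e : C -> R) : pred C := [pred a | w a < e a].
Definition Dminus (w e : C -> R) : pred C := [pred a | e a < w a].

Definition tri (w e : C -> R) : Prop :=
  exists2 a, a \in Dplus w e & forall b, b \in Dminus w e -> e a <= e b.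

Definition trile (w e : C -> R) : Prop := tri w e \/ w = e.

End Dist.

(* Main.v *)
Require Import Defs.
From HB Require Import structures.
From mathcomp Require Import all_boot all_order all_algebra.
From mathcomp Require Import zify ring lra.
Import Order.TTheory GRing.Theory Num.Theory.
Local Open Scope ring_scope.

Lemma exists_subset_card (T : finType) (A : {set T}) (n : nat) :
  (n <= #|A|)%N -> exists2 S : {set T}, S \subset A & #|S| = n.
Proof.
elim: n => [|n IH] hn; first by exists set0; rewrite ?sub0set ?cards0.
have [S sSA cS] := IH (ltnW hn).
have : (0 < #|A :\: S|)%N.
  move: hn; rewrite -(cardsID S A) (setIidPr sSA) cS.
  by rewrite -addn1 leq_add2l.
rewrite card_gt0 => /set0Pn [x]; rewrite inE => /andP [xS xA].
exists (x |: S); first by rewrite subUset sub1set xA sSA.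
by rewrite cardsU1 xS cS.
Qed.

Lemma avg_le (R : realFieldType) (T : finType) (X Y : {set T}) (f : T -> R) :
  (forall x y, x \in X -> y \in Y -> f x <= f y) ->
  #|Y|%:R * \sum_(x in X) f x <= #|X|%:R * \sum_(y in Y) f y.
Proof.
move=> H.
have -> : #|Y|%:R * \sum_(x in X) f x = \sum_(y in Y) \sum_(x in X) f x.
  by rewrite sumr_const mulr_natl.
have -> : #|X|%:R * \sum_(y in Y) f y = \sum_(y in Y) \sum_(x in X) f y.
  by rewrite mulr_sumr; apply: eq_bigr => y _; rewrite sumr_const mulr_natl.
apply: ler_sum => y yY; apply: ler_sum => x xX; exact: H.
Qed.

Lemma swap_lemma (R : realFieldType) (T : finType) (f : T -> R) (U S : {set T}) :
  (forall x y, x \in U -> y \notin U -> f x <= f y) -> (#|S| <= #|U|)%N ->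
  exists2 S' : {set T}, S' \subset U &
     (#|S'| = #|S|) /\ \sum_(a in S') f a <= \sum_(a in S) f a.
Proof.
move=> HU hSU.
set m := #|S :\: U|.
have hm : (m <= #|U :\: S|)%N.
  have h1 := cardsID U S; have h2 := cardsID S U.
  rewrite setIC in h2. rewrite /m; lia.
have [Tt sT cT] := exists_subset_card _ _ _ hm.
have hT : forall x, x \in Tt -> (x \in U) && (x \notin S).
  by move=> x /(subsetP sT); rewrite inE andbC.
exists ((S :&: U) :|: Tt).
  by rewrite subUset subsetIr (subset_trans sT) // subsetDl.
have hdis : [disjoint S :&: U & Tt].
  rewrite -setI_eq0; apply/eqP/setP => x; rewrite !inE.
  case: (boolP (x \in Tt)) => xT; last by rewrite andbF.
  by move: (hT x xT) => /andP[_ /negbTE ->].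
split.
  rewrite cardsU (disjoint_setI0 hdis) cards0 subn0 cT /m.
  by rewrite -(cardsID U S).
rewrite (big_setID (S :&: U)) /= setUK.
have -> : (S :&: U :|: Tt) :\: (S :&: U) = Tt.
  apply/setP => x; rewrite !inE.
  case: (boolP (x \in Tt)) => xT; rewrite ?orbF ?orbT ?andbF ?andbT.
  idtac.
  by move: (hT x xT) => /andP[_ /negbTE ->]; rewrite ?andbT ?orbT.
  by case: (x \in S); case: (x \in U).
rewrite [X in _ <= X](big_setID U) /=.
apply: lerD => //.
have hle : \sum_(a in Tt) f a <= \sum_(a in S :\: U) f a.
  have [m0|mpos] := posnP m.
    have e1 : Tt = set0 by apply: cards0_eq; rewrite cT.
    have e2 : S :\: U = set0 by apply: cards0_eq.
    by rewrite e1 e2 !big_set0.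
  have := @avg_le _ _ Tt (S :\: U) f.
  rewrite cT -/m => H; rewrite -(ler_pM2l (_ : 0 < m%:R)) ?ltr0n //; apply: H.
  move=> x y xT; rewrite inE => /andP[yU _]; apply: HU => //.
  by case/andP: (hT x xT).
exact: hle.
Qed.

Lemma lowsub (R : realFieldType) (T : finType) (f : T -> R) (n j : nat) :
  forall V : {set T}, #|V| = n -> (j <= n)%N ->
  exists2 S : {set T}, S \subset V &
    (#|S| = j) /\ n%:R * \sum_(a in S) f a <= j%:R * \sum_(a in V) f a.
Proof.
elim: n => [|n IH] V cV hj.
  have j0 : j = 0%N by lia.
  by exists V; rewrite ?subxx // cV j0 !mul0r.
have [ej|ltj] := eqVneq j n.+1.
  by exists V; rewrite ?subxx // cV ej.
have : (0 < #|V|)%N by rewrite cV.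
rewrite card_gt0 => /set0Pn [i0 i0V].
case: (@arg_maxP _ _ T i0 (mem V) f i0V) => a aV0 amax.
have aV : a \in V := aV0.
have cV' : #|V :\ a| = n by move: cV; rewrite (cardsD1 a V) aV; case.
have hjn : (j <= n)%N by lia.
have [S sS [cS hS]] := IH (V :\ a) cV' hjn.
exists S; first by apply: (subset_trans sS); apply: subsetDl.
split => //.
rewrite (big_setD1 a aV) /=.
have h1 : \sum_(x in S) f x <= j%:R * f a.
  apply: (@le_trans _ _ (\sum_(x in S) f a)); last by rewrite sumr_const cS mulr_natl.
  apply: ler_sum => x xS; apply: amax.
  by move/(subsetP sS): xS; rewrite !inE => /andP[].
rewrite -addn1 natrD mulrDl mul1r mulrDr.
lra.
Qed.

Definition Nm {R : realFieldType} {T : finType} (f : T -> R) (j : nat) : R :=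
  \big[Num.min/1]_(S : {set T} | #|S| == j) \sum_(a in S) f a.

Lemma Nm_le (R : realFieldType) (T : finType) (f : T -> R) (j : nat) (S : {set T}) :
  #|S| = j -> Nm f j <= \sum_(a in S) f a.
Proof.
move=> cS; rewrite /Nm (bigD1 S) /=; last by rewrite cS.
by rewrite ge_min lexx.
Qed.

Lemma Nm_ge (R : realFieldType) (T : finType) (f : T -> R) (j : nat) (x : R) :
  x <= 1 -> (forall S : {set T}, #|S| = j -> x <= \sum_(a in S) f a) -> x <= Nm f j.
Proof.
move=> x1 H; rewrite /Nm; apply: (big_ind (fun y => x <= y)) => //.
  by move=> a b ha hb; rewrite le_min ha hb.
by move=> S /eqP; apply: H.
Qed.

Lemma sub_sum_le (R : realFieldType) (T : finType) (f : T -> R) (S : {set T}) :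
  (forall a, 0 <= f a) -> \sum_(a in S) f a <= \sum_(a : T) f a.
Proof.
move=> h; rewrite [X in _ <= X](bigID (mem S)) /= lerDl.
by apply: sumr_ge0 => i _.
Qed.

Lemma dist_le1 (R : realFieldType) (T : finType) (f : T -> R) (S : {set T}) :
  distribution f -> \sum_(a in S) f a <= 1.
Proof.
case=> h1 h2; rewrite -h2; apply: sub_sum_le => a; by case/andP: (h1 a).
Qed.

Lemma diff_ge (R : realFieldType) (T : finType) (f g : T -> R) (S : {set T}) :
  \sum_(a in S) f a - norm1 (fun b => g b - f b) <= \sum_(a in S) g a.
Proof.
have h : - \sum_(a in S) (g a - f a) <= norm1 (fun b => g b - f b).
  apply: (le_trans (ler_norm _)).
  rewrite normrN; apply: (le_trans (ler_norm_sum _ _ _)).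
  by apply: (@sub_sum_le _ _ (fun b => `|g b - f b|)) => a.
move: h; rewrite sumrB; lra.
Qed.

Lemma Nm_ge' (R : realFieldType) (T : finType) (g : T -> R) (j : nat) (x : R) :
  (j <= #|T|)%N -> distribution g ->
  (forall S : {set T}, #|S| = j -> x <= \sum_(a in S) g a) -> x <= Nm g j.
Proof.
move=> hj dg H; apply: Nm_ge => //.
have hj' : (j <= #|[set: T]|)%N by rewrite cardsT.
have [S0 _ c0] := exists_subset_card _ [set: T] j hj'.
apply: le_trans (H _ c0) _; exact: dist_le1.
Qed.

Lemma geom (R : realFieldType) (A : R) (m q : nat) :
  A * \sum_(q.+1 <= j < (q + m).+1) (1 + A) ^+ ((q + m) - j) = (1 + A) ^+ m - 1.
Proof.
elim: m q => [|m IH] q.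
  by rewrite addn0 big_geq // mulr0 expr0 subrr.
rewrite addnS big_nat_recl; last by lia.
have -> : \sum_(q.+1 <= i < (q + m).+1) (1 + A) ^+ ((q + m).+1 - i.+1)
        = \sum_(q.+1 <= j < (q + m).+1) (1 + A) ^+ ((q + m) - j).
  by apply: eq_big_nat => i _; rewrite subSS.
rewrite mulrDr IH.
have -> : ((q + m).+1 - q.+1 = m)%N by lia.
rewrite exprS; ring.
Qed.

Definition Phi {R : realFieldType} {T : finType} (A : R) (k : nat) (f : T -> R) :=
  \sum_(1 <= j < k.+1) (1 + A) ^+ (k - j) * Nm f j.

Lemma step (R : realFieldType) (T : finType) (k : nat) (hk : #|T| = k)
  (A : R) (hA : 1 <= A) (f g : T -> R) :
  distribution f -> distribution g -> trile f g ->
  (forall a, a \in Dplus f g -> norm1 (fun b => g b - f b) <= A * (g a - f a)) ->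
  norm1 (fun b => g b - f b) <= A * (Phi A k g - Phi A k f).
Proof.
move=> df dg htr hb.
case: htr => [[a aP amin] | efg]; last first.
  subst g; rewrite subrr mulr0 /norm1 big1 // => b _; by rewrite subrr normr0.
have fa : f a < g a := aP.
have hmin : forall b, g b < f b -> g a <= g b.
  by move=> b hb'; apply: amin.
set D := norm1 (fun b => g b - f b).
set d := g a - f a.
have hD : D <= A * d by apply: hb.
set U := [set x | g x < g a] :|: [set a].
have aU : a \in U by rewrite !inE eqxx orbT.
have P1 : forall x, x \in U -> f x <= g x.
  move=> x; rewrite !inE => /orP [hx | /eqP ->]; last exact: ltW.
  rewrite leNgt; apply/negP => hgf.
  by move: (hmin x hgf); rewrite leNgt hx.
have P2 : forall x y, x \in U -> y \notin U -> g x <= g y.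
  move=> x y; rewrite !inE negb_or => hx /andP [hy _].
  rewrite -leNgt in hy.
  case/orP: hx => [hx | /eqP ->] //.
  exact: ltW (lt_le_trans hx hy).
set q := #|U|.
have q1 : (1 <= q)%N by rewrite /q card_gt0; apply/set0Pn; exists a.
have qk : (q <= k)%N by rewrite /q -hk max_card.
set e := fun j : nat => if (j < q)%N then 0 else if j == q then d else - D.
have claim : forall j, (1 <= j <= k)%N -> e j <= Nm g j - Nm f j.
  move=> j /andP [j1 jk].
  rewrite lerBrDl.
  apply: Nm_ge' => //; first by rewrite hk.
  move=> S cS.
  case: (ltngtP j q) => hjq.
  - have hSU : (#|S| <= #|U|)%N by rewrite cS ltnW.
    have [S' sS' [cS' hS']] := swap_lemma _ _ g U S P2 hSU.
    apply: le_trans hS'.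
    rewrite /e hjq addr0; apply: le_trans (Nm_le _ _ f j S' (etrans cS' cS)) _.
    apply: ler_sum => x xS'; apply: P1; exact: (subsetP sS').
  - rewrite /e ltnNge (ltnW hjq) /= gtn_eqF //.
    apply: le_trans (diff_ge _ _ f g S); apply: lerD => //.
    exact: Nm_le.
  - have hSU : (#|S| <= #|U|)%N by rewrite cS hjq.
    have [S' sS' [cS' hS']] := swap_lemma _ _ g U S P2 hSU.
    apply: le_trans hS'.
    have eU : S' = U.
      apply/eqP; rewrite eqEcard sS' /= cS' cS hjq.
      done.
    rewrite eU /e hjq ltnn eqxx.
    apply: le_trans (lerD (Nm_le _ _ f q U erefl) (lexx d)) _.
    rewrite -lerBrDl -sumrB (big_setD1 a aU) /= -/d lerDl.
    apply: sumr_ge0 => x; rewrite inE => /andP [_ xU].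
    by rewrite subr_ge0; apply: P1.
have xge0 : forall n : nat, 0 <= (1 + A) ^+ n.
  by move=> n; apply: exprn_ge0; lra.
have hP : \sum_(1 <= j < k.+1) (1 + A) ^+ (k - j) * e j <= Phi A k g - Phi A k f.
  rewrite /Phi -sumrB; apply: ler_sum_nat => j hj; rewrite -mulrBr.
  apply: ler_wpM2l => //; apply: claim; lia.
set Sg := \sum_(q.+1 <= j < k.+1) (1 + A) ^+ (k - j).
have hsum : \sum_(1 <= j < k.+1) (1 + A) ^+ (k - j) * e j
     = (1 + A) ^+ (k - q) * d - D * Sg.
  have qk1 : (q <= k.+1)%N by lia.
  have qk2 : (q.+1 <= k.+1)%N by lia.
  rewrite (@big_cat_nat _ _ _ q 1 k.+1 _ _ q1 qk1).
  rewrite (@big_cat_nat _ _ _ q.+1 q k.+1 _ _ (leqnSn q) qk2).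
  rewrite big_nat1 big_nat_cond big1; last first.
    by move=> j /andP [/andP [_ jq] _]; rewrite /e jq mulr0.
rewrite /= add0r /e ltnn eqxx /Sg mulr_sumr.
  congr (_ + _); rewrite -[RHS]sumrN; apply: eq_big_nat => j /andP [qj _].
  rewrite ltnNge (ltnW qj) /= gtn_eqF //; ring.
have hgeo : A * Sg = (1 + A) ^+ (k - q) - 1.
  by have := geom _ A (k - q) q; rewrite subnKC.
have hcD : (1 + A) ^+ (k - q) * D <= (1 + A) ^+ (k - q) * (A * d).
  by apply: ler_wpM2l.
apply: le_trans (ler_wpM2l (_ : 0 <= A) hP); last by lra.
rewrite hsum mulrBr mulrA (mulrC A ((1 + A) ^+ (k - q))) -mulrA.
rewrite (mulrCA A D Sg) hgeo.
move: hcD; set c := (1 + A) ^+ (k - q); nra.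
Qed.

Lemma ident (R : realFieldType) (A : R) (K : nat) :
  A ^+ 2 * \sum_(1 <= j < K.+1) (1 + A) ^+ (K - j) * j%:R + K.+1%:R * A + 1
  = (1 + A) ^+ K.+1.
Proof.
elim: K => [|K IH].
  by rewrite big_geq // mulr0 add0r expr1 mul1r addrC.
rewrite big_nat_recr //= subnn expr0 mul1r.
have -> : \sum_(1 <= i < K.+1) (1 + A) ^+ (K.+1 - i) * i%:R
        = (1 + A) * \sum_(1 <= i < K.+1) (1 + A) ^+ (K - i) * i%:R.
  rewrite mulr_sumr; apply: eq_big_nat => i /andP [_ hi].
  by rewrite subSn // exprS mulrA.
rewrite [(1 + A) ^+ K.+2]exprS -IH -!natr1; ring.
Qed.

Lemma disc_ge (R : realFieldType) (T : finType) (f : T -> R) (a : T) :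
  `|f a - (#|T|%:R)^-1| <= disc f.
Proof. by rewrite /disc (bigD1 a) //= le_max lexx. Qed.

Lemma disc_ge0 (R : realFieldType) (T : finType) (f : T -> R) : 0 <= disc f.
Proof.
rewrite /disc; apply: (big_ind (fun y => 0 <= y)) => //.
by move=> x y hx hy; rewrite le_max hx.
Qed.

Theorem lemma3p2 (R : realFieldType) (C : finType) (k : nat)
  (hk : #|C| = k) (hk1 : (1 <= k)%N)
  (w : nat -> C -> R)
  (hdist : forall n, distribution (w n))
  (hmono : forall n, trile (w n) (w n.+1))
  (A : R) (hA : 1 <= A)
  (hbound : forall (n : nat) (a : C), a \in Dplus (w n) (w n.+1) ->
     norm1 (fun b => w n.+1 b - w n b) <= A * (w n.+1 a - w n a)) :
  forall N : nat,
    \sum_(n < N) norm1 (fun b => w n.+1 b - w n b)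
      <= (1 + A) ^+ k.+1 / A * disc (w 0%N).
Proof.
move=> N.
have tele : forall M, \sum_(n < M) norm1 (fun b => w n.+1 b - w n b)
    <= A * (Phi A k (w M) - Phi A k (w 0%N)).
  elim => [|M IH]; first by rewrite big_ord0 subrr mulr0.
  rewrite big_ord_recr /=.
  have := step _ _ k hk A hA (w M) (w M.+1) (hdist M) (hdist M.+1) (hmono M) (hbound M).
  move: IH; lra.
set disc0 := disc (w 0%N).
have d0 : 0 <= disc0 by apply: disc_ge0.
have kpos : (0 : R) < k%:R by rewrite ltr0n.
have hPhi : Phi A k (w N) - Phi A k (w 0%N)
    <= disc0 * \sum_(1 <= j < k.+1) (1 + A) ^+ (k - j) * j%:R.
  rewrite /Phi -sumrB mulr_sumr; apply: ler_sum_nat => j /andP [j1 jk].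
  have jk' : (j <= k)%N by lia.
  rewrite -mulrBr mulrCA; apply: ler_wpM2l; first by apply: exprn_ge0; lra.
  have hup : Nm (w N) j <= j%:R / k%:R.
    have hV : #|[set: C]| = k by rewrite cardsT.
    have [S _ [cS hS]] := lowsub _ _ (w N) k j [set: C] hV jk'.
    apply: le_trans (Nm_le _ _ (w N) j S cS) _.
    rewrite ler_pdivlMr // mulrC.
    apply: le_trans hS _.
    have -> : \sum_(a in [set: C]) w N a = \sum_(a : C) w N a.
      by apply: eq_bigl => i; rewrite inE.
    by case: (hdist N) => _ ->; rewrite mulr1.
  have hlo : j%:R / k%:R - j%:R * disc0 <= Nm (w 0%N) j.
    apply: Nm_ge'; [by rewrite hk | exact: hdist |].
    move=> S cS.
    have -> : j%:R / k%:R - j%:R * disc0 = \sum_(a in S) (k%:R^-1 - disc0).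
      by rewrite sumr_const cS -mulr_natl; ring.
    apply: ler_sum => a _.
    have := disc_ge _ _ (w 0%N) a; rewrite hk -/disc0 => h.
    move: (ler_norm (k%:R^-1 - w 0%N a)); rewrite distrC => h2.
    lra.
  lra.
apply: le_trans (tele N) _.
apply: le_trans (ler_wpM2l (_ : 0 <= A) hPhi) _; first lra.
rewrite -(ident _ A k).
set Sj := \sum_(1 <= j < k.+1) (1 + A) ^+ (k - j) * j%:R.
have A0 : A != 0 by apply/eqP => h; move: hA; rewrite h; lra.
have -> : (A ^+ 2 * Sj + k.+1%:R * A + 1) / A = A * Sj + (k.+1%:R * A + 1) / A.
  by field.
rewrite mulrDl.
have : 0 <= (k.+1%:R * A + 1) / A * disc0.
  apply: mulr_ge0 => //; apply: divr_ge0; last lra.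
  apply: addr_ge0 => //; apply: mulr_ge0; lra.
move=> h; rewrite mulrCA -mulrA; lra.
Qed.
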